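(* Suppose the population EM operator $M$ is contractive with parameter $\kappa\in(0,1)$ on $\mathbb{B}_2(r;\theta^* )$, i.e. $\|M(\theta)-\theta^*\|_2\le\kappa\|\theta-\theta^*\|_2$ for all $\theta\in\mathbb{B}_2(r;\theta^* )$, and the initial vector $\theta^0$ belongs to $\mathbb{B}_2(r;\theta^* )$. Let $\delta\in(0,1)$. (a) If $n$ is such that $\epsilon^M_{\mathrm{unif}}(n,\delta)\le(1-\kappa)r$, then the EM iterates $\theta^{t+1}=M_n(\theta^t)$ (all $n$ samples used at each step) satisfy, with probability at least $1-\delta$, for all $t\ge 0$, $$\|\theta^t-\theta^*\|_2\le\kappa^t\|\theta^0-\theta^*\|_2+\frac{1}{1-\kappa}\,\epsilon^M_{\mathrm{unif}}(n,\delta).$$ (b) Fix an iteration number $T$ and suppose $\epsilon^M(n/T,\delta/T)\le(1-\kappa)r$. Split the $n$ samples into $T$ disjoint subsets of size $n/T$ and define the sample-splitting iterates $\theta^{t+1}=M_{n/T}(\theta^t)$, where the $(t+1)$-th update uses the $(t+1)$-th subset (fresh samples). Then, with probability at least $1-\delta$, for all $t\in\{0,1,\dots,T\}$, $$\|\theta^t-\theta^*\|_2\le\kappa^t\|\theta^0-\theta^*\|_2+\frac{1}{1-\kappa}\,\epsilon^M\Big(\frac{n}{T},\frac{\delta}{T}\Big).$$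
   Context: Setting: $(Y,Z)$ is a pair of random variables (observed $Y$, latent $Z$) with joint density $f_{\theta^*}$ from a family $\{f_\theta:\theta\in\Omega\}$, $\Omega\subseteq\mathbb{R}^d$ nonempty compact convex; $g_\theta(y)=\int f_\theta(y,z)dz$; $k_\theta(z\mid y)$ is the conditional density of $Z$ given $Y=y$. The population $Q$-function is $Q(\theta'\mid\theta)=\int(\int k_\theta(z\mid y)\log f_{\theta'}(y,z)dz)g_{\theta^*}(y)dy$ and the population EM operator is $M(\theta)=\arg\max_{\theta'\in\Omega}Q(\theta'\mid\theta)$. Given i.i.d. samples $y_1,\dots,y_n$ from $g_{\theta^*}$, the sample $Q$-function is $\widehat Q_n(\theta'\mid\theta)=\frac1n\sum_{i=1}^n\int k_\theta(z\mid y_i)\log f_{\theta'}(y_i,z)dz$ and the sample EM operator is $M_n(\theta)=\arg\max_{\theta'\in\Omega}\widehat Q_n(\theta'\mid\theta)$ (assumed well defined). $\mathbb{B}_2(r;\theta^* )=\{\theta\in\Omega:\|\theta-\theta^*\|_2\le r\}$. For sample size $n$ and $\delta\in(0,1)$: $\epsilon^M(n,\delta)$ is the smallest scalar such that for every fixed $\theta\in\mathbb{B}_2(r;\theta^* )$, $\|M_n(\theta)-M(\theta)\|_2\le\epsilon^M(n,\delta)$ with probability at least $1-\delta$; $\epsilon^M_{\mathrm{unif}}(n,\delta)$ is the smallest scalar such that $\sup_{\theta\in\mathbb{B}_2(r;\theta^* )}\|M_n(\theta)-M(\theta)\|_2\le\epsilon^M_{\mathrm{unif}}(n,\delta)$ with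 probability at least $1-\delta$. *)

(* Defs.v *)
From HB Require Import structures.
From mathcomp Require Import all_boot all_order all_algebra.
From mathcomp Require Import all_classical all_reals all_analysis.
Set Implicit Arguments. Unset Strict Implicit. Unset Printing Implicit Defensive.
Import Order.TTheory GRing.Theory Num.Theory.
Import numFieldNormedType.Exports.
Local Open Scope classical_set_scope.
Local Open Scope ring_scope.

Section EMDefs.
Variable R : realType.
Variable d : nat.

Definition norm2 (v : 'rV[R]_d) : R := Num.sqrt (\sum_(i < d) v ord0 i ^+ 2).

Definition ball2 (Om : set 'rV[R]_d) (r : R) (ts : 'rV[R]_d) : set 'rV[R]_d :=
  [set th | Om th /\ norm2 (th - ts) <= r].

(* conversions used to state measurability in the parameter *)
Definition rv2t (v : 'rV[R]_d) : d.-tuple R := [tuple v ord0 i | i < d].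
Definition t2rv (t : d.-tuple R) : 'rV[R]_d := \row_i tnth t i.

Section Model.
Context {dY dZ : measure_display} {Y : measurableType dY} {Z : measurableType dZ}.
Variables (muY : {measure set Y -> \bar R}) (muZ : {measure set Z -> \bar R}).
(* f theta y z : joint density of (Y,Z) w.r.t. muY (x) muZ *)
Variable f : 'rV[R]_d -> Y -> Z -> R.

Definition is_density_family : Prop :=
  forall th, (forall y z, 0 <= f th y z) /\
    measurable_fun [set: Y * Z] (fun p => f th p.1 p.2) /\
    (\int[muY]_y \int[muZ]_z (f th y z)%:E = 1)%E.

Definition gdens (th : 'rV[R]_d) (y : Y) : \bar R := (\int[muZ]_z (f th y z)%:E)%E.

Definition kdens (th : 'rV[R]_d) (z : Z) (y : Y) : R := f th y z / fine (gdens th y).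

Definition inner (th' th : 'rV[R]_d) (y : Y) : \bar R :=
  (\int[muZ]_z ((kdens th z y)%:E * lne (f th' y z)%:E))%E.

Definition Qfun (ts th' th : 'rV[R]_d) : \bar R :=
  (\int[muY]_y (inner th' th y * gdens ts y))%E.

Definition Qhat m (ys : m.-tuple Y) (th' th : 'rV[R]_d) : \bar R :=
  ((m%:R^-1)%:E * \sum_(i < m) inner th' th (tnth ys i))%E.

Definition is_argmax (Om : set 'rV[R]_d) (F : 'rV[R]_d -> \bar R) x : Prop :=
  Om x /\ forall y, Om y -> (F y <= F x)%E.
End Model.

Section Sampling.
Context {dT dY : measure_display} {T : measurableType dT} {Y : measurableType dY}.
Variable P : probability T R.

Definition iid_with_density (muY : {measure set Y -> \bar R}) (g : Y -> \bar R)
  (X : nat -> T -> Y) : Prop :=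
  (forall i, measurable_fun [set: T] (X i)) /\
  (forall i A, measurable A -> P (X i @^-1` A) = (\int[muY]_(y in A) g y)%E) /\
  (forall n (A : 'I_n -> set Y), (forall i, measurable (A i)) ->
     P (\bigcap_(i in [set: 'I_n]) (X i @^-1` A i)) =
     (\prod_(i < n) fine (P (X i @^-1` A i)))%:E).

Definition block (X : nat -> T -> Y) (s m : nat) (w : T) : m.-tuple Y :=
  [tuple X (s + i)%N w | i < m].

Variables (X : nat -> T -> Y) (Om : set 'rV[R]_d) (r : R) (ts : 'rV[R]_d).
Variables (M : 'rV[R]_d -> 'rV[R]_d) (Mn : forall m, m.-tuple Y -> 'rV[R]_d -> 'rV[R]_d).

Definition wp_atleast (p : R) (E : T -> Prop) : Prop :=
  exists A, measurable A /\ (p%:E <= P A)%E /\ forall w, A w -> E w.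

Definition epsM (n : nat) (delta : R) : \bar R :=
  ereal_inf [set e%:E | e in [set e : R | forall th, ball2 Om r ts th ->
    wp_atleast (1 - delta)
      (fun w => norm2 (Mn (block X 0 n w) th - M th) <= e)]].

Definition epsM_unif (n : nat) (delta : R) : \bar R :=
  ereal_inf [set e%:E | e in [set e : R |
    wp_atleast (1 - delta)
      (fun w => forall th, ball2 Om r ts th ->
                  norm2 (Mn (block X 0 n w) th - M th) <= e)]].

Fixpoint em_iter (n : nat) (th0 : 'rV[R]_d) (t : nat) (w : T) : 'rV[R]_d :=
  match t with
  | 0 => th0
  | t'.+1 => Mn (block X 0 n w) (em_iter n th0 t' w)
  end.

(* sample-splitting iterates: step t+1 uses block number t+1 (of size m) *)
Fixpoint em_split_iter (m : nat) (th0 : 'rV[R]_d) (t : nat) (w : T) : 'rV[R]_d :=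
  match t with
  | 0 => th0
  | t'.+1 => Mn (block X (t' * m) m w) (em_split_iter m th0 t' w)
  end.
End Sampling.
End EMDefs.

(* Main.v *)
Require Import Defs.
From HB Require Import structures.
From mathcomp Require Import all_boot all_order all_algebra.
From mathcomp Require Import all_classical all_reals all_analysis.
From mathcomp Require Import ring lra.
Set Implicit Arguments. Unset Strict Implicit. Unset Printing Implicit Defensive.
Import Order.TTheory GRing.Theory Num.Theory.
Import numFieldNormedType.Exports.
Local Open Scope classical_set_scope.
Local Open Scope ring_scope.

Section Norm.
Variables (R : realType) (d : nat).
Implicit Types u v : 'rV[R]_d.

Lemma norm2_ge0 v : 0 <= norm2 v.
Proof. exact: sqrtr_ge0. Qed.

Lemma sumsq_ge0 v : 0 <= \sum_(i < d) v ord0 i ^+ 2.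
Proof. by apply: sumr_ge0 => i _; exact: sqr_ge0. Qed.

Lemma norm2_sq v : norm2 v ^+ 2 = \sum_(i < d) v ord0 i ^+ 2.
Proof. by rewrite /norm2 sqr_sqrtr // sumsq_ge0. Qed.

Lemma sumsq0 v : \sum_(i < d) v ord0 i ^+ 2 = 0 -> forall i, v ord0 i = 0.
Proof.
move=> /eqP; rewrite psumr_eq0; last by move=> i _; exact: sqr_ge0.
by move=> /allP H i; apply/eqP; rewrite -sqrf_eq0; apply: H; rewrite mem_index_enum.
Qed.

Lemma cs u v : \sum_(i < d) u ord0 i * v ord0 i <= norm2 u * norm2 v.
Proof.
set a := norm2 u; set b := norm2 v.
have a0 : 0 <= a by exact: norm2_ge0.
have b0 : 0 <= b by exact: norm2_ge0.
have [ea|az] := eqVneq a 0.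
  have : \sum_(i < d) u ord0 i ^+ 2 = 0 by rewrite -norm2_sq -/a ea expr2 mul0r.
  move/sumsq0 => H; rewrite ea mul0r big1 // => i _; by rewrite H mul0r.
have [eb|bz] := eqVneq b 0.
  have : \sum_(i < d) v ord0 i ^+ 2 = 0 by rewrite -norm2_sq -/b eb expr2 mul0r.
  move/sumsq0 => H; rewrite eb mulr0 big1 // => i _; by rewrite H mulr0.
have ab : 0 < a * b by rewrite mulr_gt0 // lt0r ?az ?bz.
have key : 2 * (a * b) * \sum_(i < d) u ord0 i * v ord0 i <=
   b ^+ 2 * \sum_(i < d) u ord0 i ^+ 2 + a ^+ 2 * \sum_(i < d) v ord0 i ^+ 2.
  rewrite !mulr_sumr -big_split /=; apply: ler_sum => i _.
  have := sqr_ge0 (b * u ord0 i - a * v ord0 i); nra.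
move: key; rewrite -!norm2_sq -/a -/b => key.
rewrite -(ler_pM2l (_ : 0 < 2 * (a * b))); last by rewrite mulr_gt0.
nra.
Qed.

Lemma norm2D u v : norm2 (u + v) <= norm2 u + norm2 v.
Proof.
have h0 := norm2_ge0 u; have h1 := norm2_ge0 v; have h2 := norm2_ge0 (u + v).
rewrite -(ler_pXn2r (_ : (0 < 2)%N)) ?nnegrE ?addr_ge0 //.
rewrite norm2_sq sqrrD !norm2_sq.
have -> : \sum_(i < d) (u + v) ord0 i ^+ 2 =
   \sum_(i < d) u ord0 i ^+ 2 + \sum_(i < d) v ord0 i ^+ 2 + 2 * \sum_(i < d) u ord0 i * v ord0 i.
  rewrite mulr_sumr -!big_split /=; apply: eq_bigr => i _; rewrite !mxE; ring.
have := cs u v; lra.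
Qed.

Lemma norm2B_tri u v w : norm2 (u - w) <= norm2 (u - v) + norm2 (v - w).
Proof. by have := norm2D (u - v) (v - w); rewrite addrA subrK. Qed.
End Norm.
Lemma iter_bound (R : realType) (d : nat) (Om : set 'rV[R]_d) (r kappa e : R)
  (ts th0 : 'rV[R]_d) (M : 'rV[R]_d -> 'rV[R]_d) (x : nat -> 'rV[R]_d) (Tb : nat) :
  0 < kappa < 1 -> 0 <= e -> e <= (1 - kappa) * r ->
  (forall th, ball2 Om r ts th -> norm2 (M th - ts) <= kappa * norm2 (th - ts)) ->
  x 0%N = th0 -> ball2 Om r ts th0 ->
  (forall t, (t < Tb)%N -> ball2 Om r ts (x t) ->
     Om (x t.+1) /\ norm2 (x t.+1 - M (x t)) <= e) ->
  forall t, (t <= Tb)%N -> ball2 Om r ts (x t) /\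
    norm2 (x t - ts) <= kappa ^+ t * norm2 (th0 - ts) + e * (1 - kappa ^+ t) / (1 - kappa).
Proof.
move=> /andP[k0 k1] e0 er Hc x0 b0 Hs.
have n0r : norm2 (th0 - ts) <= r by case: b0.
have n00 := norm2_ge0 (th0 - ts).
have k1' : 0 < 1 - kappa by rewrite subr_gt0.
have erk : e / (1 - kappa) <= r by rewrite ler_pdivrMr // mulrC.
elim => [|t IH] tT.
  rewrite x0 expr0 mul1r subrr mulr0 mul0r addr0; split => //.
have [bt nt] := IH (ltnW tT).
have [Omt1 st] := Hs t tT bt.
have kt0 : 0 <= kappa ^+ t by rewrite exprn_ge0 // ltW.
have kt1 : kappa ^+ t <= 1 by rewrite exprn_ile1 // ltW.
have nt1 : norm2 (x t.+1 - ts) <= kappa ^+ t.+1 * norm2 (th0 - ts) + e * (1 - kappa ^+ t.+1) / (1 - kappa).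
  apply: (le_trans (norm2B_tri _ (M (x t)) _)).
  have := Hc _ bt => hc.
  have : kappa * norm2 (x t - ts) <= kappa * (kappa ^+ t * norm2 (th0 - ts) + e * (1 - kappa ^+ t) / (1 - kappa)).
    by rewrite ler_pM2l.
  have -> : kappa ^+ t.+1 * norm2 (th0 - ts) + e * (1 - kappa ^+ t.+1) / (1 - kappa) =
     e + kappa * (kappa ^+ t * norm2 (th0 - ts) + e * (1 - kappa ^+ t) / (1 - kappa)).
    rewrite exprS; field; by rewrite lt0r_neq0.
  lra.
split => //; split => //.
apply: (le_trans nt1).
have kt10 : 0 <= kappa ^+ t.+1 by rewrite exprn_ge0 // ltW.
have kt11 : kappa ^+ t.+1 <= 1 by rewrite exprn_ile1 // ltW.
rewrite -mulrA (mulrC (1 - _)) mulrA.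
have : e / (1 - kappa) * (1 - kappa ^+ t.+1) <= r * (1 - kappa ^+ t.+1) by rewrite ler_wpM2r // subr_ge0.
nra.
Qed.

Lemma wp_inf (R : realType) dT (T : measurableType dT) (P : probability T R)
  (p : R) (E : R -> T -> Prop) (e0 : R) :
  (forall e, e0 < e -> wp_atleast P p (E e)) ->
  (forall w, (forall N, exists k, (N <= k)%N /\ E (e0 + k.+1%:R^-1) w) -> E e0 w) ->
  wp_atleast P p (E e0).
Proof.
move=> H Hc.
have : forall k : nat, exists A, measurable A /\ (p%:E <= P A)%E /\
    forall w, A w -> E (e0 + k.+1%:R^-1) w.
  move=> k; apply: H; rewrite ltrDl invr_gt0 ltr0n //.
move=> /choice [A HA].
pose D N := \bigcup_k A (k + N)%N.
have mA k : measurable (A k) by case: (HA k).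
have mD N : measurable (D N) by apply: bigcupT_measurable => k; exact: mA.
have mC : measurable (\bigcap_N D N) by apply: bigcapT_measurable.
have pD N : (p%:E <= P (D N))%E.
  apply: (le_trans (proj1 (proj2 (HA N)))); apply: le_measure => //; rewrite ?inE //.
  by move=> w Aw; exists 0%N => //.
have niD : nonincreasing_seq D.
  apply/nonincreasing_seqP => N; apply/subsetPset => w [k _ Akw]; exists k.+1 => //; by rewrite addSnnS.
have cv := nonincreasing_cvg_mu (mu := P) (F := D) _ mD mC niD.
have fin : (P (D 0%N) < +oo)%E by rewrite (le_lt_trans (probability_le1 P (mD 0%N))) ?ltry.
exists (\bigcap_N D N); split => //; split.
  rewrite -(cvg_lim _ (cv fin)) //; apply: lime_ge; first by apply/cvg_ex; eexists; exact: (cv fin).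
  by apply: nearW => N; exact: pD.
move=> w Cw; apply: Hc => N.
have [k _ Akw] := Cw N I.
exists (k + N)%N; split; first exact: leq_addl.
by case: (HA (k + N)%N) => _ [_]; apply.
Qed.

Section TupleUnique.
Context (R : realType) (dY : measure_display) (Y : measurableType dY) (n : nat).

Lemma mem_bigsetU (U : Type) (F : 'I_n -> set U) S :
  (\big[setU/set0]_(i < n) F i) S -> exists i, F i S.
Proof.
move: S; rewrite /index_enum -enumT; elim: (enum 'I_n) => [|a l IH] S.
  by rewrite big_nil.
by rewrite big_cons => -[H|/IH //]; exists a.
Qed.

Definition rect (A : 'I_n -> set Y) : set (n.-tuple Y) := [set x | forall i, A i (tnth x i)].
Definition rects : set (set (n.-tuple Y)) :=
  [set rect A | A in [set A : 'I_n -> set Y | forall i, measurable (A i)]].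

Lemma rect_measurable A : (forall i, measurable (A i)) -> measurable (rect A).
Proof.
move=> mA.
have -> : rect A = \bigcap_(i in [set: 'I_n]) (setT `&` (fun x : n.-tuple Y => tnth x i) @^-1` A i).
  apply/seteqP; split => x.
    by move=> Ax i _; split => //; exact: Ax.
  by move=> H i; case: (H i I).
apply: fin_bigcap_measurable; first exact: finite_finset.
move=> i _; exact: measurable_tnth.
Qed.

Lemma tuple_measurableE : (measurable : set (set (n.-tuple Y))) = <<s rects >>.
Proof.
apply/seteqP; split.
  apply: smallest_sub; first exact: smallest_sigma_algebra.
  move=> S0 /(@mem_bigsetU _ _ S0) [i [B mB <-]].
  apply: sub_sigma_algebra.
  exists (fun j => if j == i then B else setT).
    by move=> j; case: ifP.
  apply/seteqP; split => x /=.
    by move=> H; split => //; move: (H i); rewrite eqxx.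
  by move=> [_ Bx] j; case: ifP => // /eqP ->.
apply: smallest_sub; first exact: sigma_algebra_measurable.
by move=> _ [A mA <-]; exact: rect_measurable.
Qed.

Lemma rects_setI : setI_closed rects.
Proof.
move=> _ _ [A mA <-] [B mB <-]; exists (fun i => A i `&` B i).
  by move=> i; exact: measurableI.
by apply/seteqP; split => x /=; [move=> H; split => i; case: (H i)|move=> [H1 H2] i; split].
Qed.

Lemma tuple_measure_unique (m1 m2 : {measure set (n.-tuple Y) -> \bar R}) :
  (forall A, (forall i, measurable (A i)) -> m1 (rect A) = m2 (rect A)) ->
  (m1 setT < +oo)%E -> forall S, measurable S -> m1 S = m2 S.
Proof.
move=> H fin S mS.
apply: (measure_unique rects (fun _ => setT) tuple_measurableE rects_setI) => //.
- move=> _; exists (fun _ => setT) => //.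
  by apply/seteqP; split.
- by rewrite bigcup_const.
- by move=> _ [A mA <-]; exact: H.
Qed.
End TupleUnique.


Section Joint.
Context (R : realType) (dT dY : measure_display) (T : measurableType dT) (Y : measurableType dY).
Variables (P : probability T R) (X : nat -> T -> Y).
Hypothesis mX : forall i, measurable_fun setT (X i).
Hypothesis idX : forall i A, measurable A -> P (X i @^-1` A) = P (X 0 @^-1` A).
Hypothesis indX : forall n (A : 'I_n -> set Y), (forall i, measurable (A i)) ->
     P (\bigcap_(i in [set: 'I_n]) (X i @^-1` A i)) =
     (\prod_(i < n) fine (P (X i @^-1` A i)))%:E.

Lemma block_measurable s m : measurable_fun setT (block X s m).
Proof.
apply/measurable_fun_tnthP => i.
have -> : ((fun t : m.-tuple Y => tnth t i) \o block X s m) = X (s + i)%N.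
  by apply/funext => w /=; rewrite tnth_mktuple.
exact: mX.
Qed.

Lemma pair_rect s m (A : 'I_s -> set Y) (B : 'I_m -> set Y) :
  (forall i, measurable (A i)) -> (forall i, measurable (B i)) ->
  P (block X 0 s @^-1` rect A `&` block X s m @^-1` rect B) =
  ((\prod_(i < s) fine (P (X 0 @^-1` A i))) * \prod_(i < m) fine (P (X 0 @^-1` B i)))%:E.
Proof.
move=> mA mB.
pose C (j : 'I_(s + m)) := match fintype.split j with inl i => A i | inr k => B k end.
have mC j : measurable (C j) by rewrite /C; case: (fintype.split j).
have -> : block X 0 s @^-1` rect A `&` block X s m @^-1` rect B =
    \bigcap_(j in [set: 'I_(s + m)]) (X j @^-1` C j).
  apply/seteqP; split => w.
    move=> [/= HA HB] j _; rewrite /C /=.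
    case: splitP => [i ji|k jk].
      by have := HA i; rewrite tnth_mktuple add0n -ji.
    by have := HB k; rewrite tnth_mktuple -jk.
  move=> H; split => /=.
    move=> i; rewrite tnth_mktuple add0n.
    have := H (lshift m i) I; rewrite /C /= (unsplitK (inl _ i) : fintype.split (lshift m i) = inl i) //.
  move=> k; rewrite tnth_mktuple.
  have := H (rshift s k) I; rewrite /C /= (unsplitK (inr _ k) : fintype.split (rshift s k) = inr k) //.
rewrite indX // big_split_ord /=.
congr ((_ * _)%:E); apply: eq_bigr => i _.
  by rewrite /C (unsplitK (inl _ i) : fintype.split (lshift m i) = inl i) /= idX.
by rewrite /C (unsplitK (inr _ i) : fintype.split (rshift s i) = inr i) /= idX.
Qed.

Definition pfm (m : {measure set T -> \bar R}) k s : {measure set (k.-tuple Y) -> \bar R} :=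
  measure_function_pushforward__canonical__measure_function_Measure m (@block_measurable s k).

Lemma pfmE m k s A : pfm m k s A = m (block X s k @^-1` A).
Proof. by []. Qed.

Lemma rectT k : rect (fun _ : 'I_k => @setT Y) = setT.
Proof. by apply/seteqP; split. Qed.

Lemma rect0 (A : 'I_0 -> set Y) : rect A = setT.
Proof. by apply/seteqP; split => // x _ [] //. Qed.

Lemma block_pre_measurable s m B : measurable B -> measurable (block X s m @^-1` B).
Proof. by move=> mB; rewrite -[X in measurable X]setTI; exact: block_measurable. Qed.

Lemma P_fin A : measurable A -> (P A < +oo)%E.
Proof. by move=> mA; rewrite (le_lt_trans (probability_le1 P mA)) ?ltry. Qed.

Lemma P_block_rect s m (B : 'I_m -> set Y) : (forall i, measurable (B i)) ->
  P (block X s m @^-1` rect B) = (\prod_(i < m) fine (P (X 0 @^-1` B i)))%:E.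
Proof.
move=> mB; have := pair_rect (A := fun _ : 'I_s => setT) (fun _ => measurableT) mB.
rewrite rectT preimage_setT setTI => ->; rewrite big1 ?mul1r // => i _.
by rewrite preimage_setT probability_setT.
Qed.

Lemma law_shift s m B : measurable B -> P (block X s m @^-1` B) = P (block X 0 m @^-1` B).
Proof.
move=> mB; rewrite -!pfmE.
apply: (tuple_measure_unique (m1 := pfm P m s) (m2 := pfm P m 0)) => //.
  move=> Bi mBi; rewrite !pfmE; apply: (etrans (@P_block_rect s m Bi mBi)).
  exact: esym (@P_block_rect 0 m Bi mBi).
by rewrite pfmE; apply: P_fin; apply: block_pre_measurable.
Qed.

Lemma joint_rectB s m A (B : 'I_m -> set Y) : measurable A -> (forall i, measurable (B i)) ->
  P (block X 0 s @^-1` A `&` block X s m @^-1` rect B) =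
  (P (block X 0 s @^-1` A) * P (block X s m @^-1` rect B))%E.
Proof.
move=> mA mB.
have mD : measurable (block X s m @^-1` rect B) by apply: block_pre_measurable; exact: rect_measurable.
have c0 : 0 <= fine (P (block X s m @^-1` rect B)) by apply: fine_ge0.
have fin : P (block X s m @^-1` rect B) \is a fin_num by rewrite fin_num_measure.
have H : P (block X 0 s @^-1` A `&` block X s m @^-1` rect B) =
    ((fine (P (block X s m @^-1` rect B)))%:E * P (block X 0 s @^-1` A))%E.
  apply: (tuple_measure_unique (m1 := pfm (mrestr P mD) s 0) (m2 := mscale (NngNum c0) (pfm P s 0))) => //.
    move=> Ai mAi; rewrite /= /mscale /= /mrestr /= !pfmE fineK //.
    apply: (etrans (pair_rect mAi mB)); apply: esym.
    apply: (etrans (congr2 (fun a b => (a * b)%E) (@P_block_rect s m B mB) (@P_block_rect 0 s Ai mAi))).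
    by rewrite -EFinM mulrC.
  rewrite pfmE /mrestr; apply: P_fin; apply: measurableI => //; exact: block_pre_measurable.
by rewrite H fineK // muleC.
Qed.

Lemma joint s m A B : measurable A -> measurable B ->
  P (block X 0 s @^-1` A `&` block X s m @^-1` B) =
  (P (block X 0 s @^-1` A) * P (block X s m @^-1` B))%E.
Proof.
move=> mA mB.
have mD : measurable (block X 0 s @^-1` A) by apply: block_pre_measurable.
have c0 : 0 <= fine (P (block X 0 s @^-1` A)) by apply: fine_ge0.
have fin : P (block X 0 s @^-1` A) \is a fin_num by rewrite fin_num_measure.
have H : P (block X s m @^-1` B `&` block X 0 s @^-1` A) =
    ((fine (P (block X 0 s @^-1` A)))%:E * P (block X s m @^-1` B))%E.
  apply: (tuple_measure_unique (m1 := pfm (mrestr P mD) m s) (m2 := mscale (NngNum c0) (pfm P m s))) => //.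
    move=> Bi mBi; rewrite /= /mscale /= /mrestr /= /pushforward fineK // setIC.
    exact: joint_rectB.
  rewrite pfmE /mrestr; apply: P_fin; apply: measurableI => //; exact: block_pre_measurable.
by rewrite setIC H fineK.
Qed.
Definition blf s m : {mfun T >-> m.-tuple Y} :=
  MeasurableFun.Pack (MeasurableFun.Class (isMeasurableFun.Build _ _ _ _ _ (@block_measurable s m))).

Lemma prod_bound s m (S : set (s.-tuple Y * m.-tuple Y)) (c : R) : measurable S ->
  (forall a, (P (block X 0 m @^-1` xsection S a) <= c%:E)%E) ->
  (P ((fun w => (block X 0 s w, block X s m w)) @^-1` S) <= c%:E)%E.
Proof.
move=> mS Hc.
have mpair : measurable_fun setT (fun w => (block X 0 s w, block X s m w)).
  exact: measurable_fun_pair (@block_measurable 0 s) (@block_measurable s m).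
pose m' := measure_function_pushforward__canonical__measure_function_Measure P mpair.
have H : (product_measure1 (distribution P (blf 0 s)) (distribution P (blf s m))) S =
     P ((fun w => (block X 0 s w, block X s m w)) @^-1` S).
  apply: (@product_measure_unique _ _ _ _ _ (distribution P (blf 0 s)) (distribution P (blf s m)) m' _ S mS).
  move=> A B mA mB.
  exact: (@joint s m A B mA mB).
rewrite -H /product_measure1.
have -> : c%:E = (\int[distribution P (blf 0 s)]_x (cst c%:E) x)%E.
  by rewrite integral_cst // -[LHS]mule1; congr (_ * _)%E; apply: esym; exact: (probability_setT P).
apply: ge0_le_integral => //.
- exact: measurable_fun_xsection.
- move=> x _ /=; rewrite /distribution /pushforward /=.
  rewrite (@law_shift s m); last exact: measurable_xsection.
  exact: (Hc x).
Qed.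
End Joint.

Section Meas.
Context (R : realType) (d : nat) (dY : measure_display) (Y : measurableType dY).

Lemma rv2tK (v : 'rV[R]_d) : t2rv (rv2t v) = v.
Proof. by apply/rowP => i; rewrite /t2rv /rv2t mxE tnth_mktuple. Qed.

Lemma tnth_rv2t (v : 'rV[R]_d) i : tnth (rv2t v) i = v ord0 i.
Proof. by rewrite tnth_mktuple. Qed.

Lemma meas_sumsq dU (U : measurableType dU) (f g : U -> d.-tuple R) :
  measurable_fun setT f -> measurable_fun setT g ->
  measurable_fun setT (fun u => \sum_(i < d) (tnth (f u) i - tnth (g u) i) ^+ 2).
Proof.
move=> mf mg; apply: measurable_sum => i; apply: measurable_realfun.measurable_funX.
apply: measurable_realfun.measurable_funB.
  exact: (measurableT_comp (measurable_tnth i) mf).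
exact: (measurableT_comp (measurable_tnth i) mg).
Qed.

Lemma meas_nth N (k : nat) (y0 : Y) : measurable_fun setT (fun a : N.-tuple Y => nth y0 a k).
Proof.
case: (ltnP k N) => h.
  have -> : (fun a : N.-tuple Y => nth y0 a k) = (fun a => tnth a (Ordinal h)).
    by apply/funext => a; rewrite (tnth_nth y0).
  exact: measurable_tnth.
have -> : (fun a : N.-tuple Y => nth y0 a k) = cst y0.
  by apply/funext => a; rewrite nth_default // size_tuple.
exact: measurable_cst.
Qed.

Lemma sub_meas N s m (y0 : Y) :
  measurable_fun setT (fun a : N.-tuple Y => [tuple nth y0 a (s + i) | i < m]).
Proof.
apply/measurable_fun_tnthP => i.
have -> : ((fun t : m.-tuple Y => tnth t i) \o (fun a : N.-tuple Y => [tuple nth y0 a (s + i) | i < m]))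
   = (fun a : N.-tuple Y => nth y0 a (s + i)).
  by apply/funext => a /=; rewrite tnth_mktuple.
exact: meas_nth.
Qed.

Variables (Mn : forall m, m.-tuple Y -> 'rV[R]_d -> 'rV[R]_d) (m : nat) (th0 : 'rV[R]_d).

Fixpoint hit (x : nat -> Y) (t : nat) : 'rV[R]_d :=
  match t with
  | 0 => th0
  | t'.+1 => @Mn m [tuple x (t' * m + i)%N | i < m] (hit x t')
  end.

Lemma hit_dep (x x' : nat -> Y) t : (forall i, (i < t * m)%N -> x i = x' i) -> hit x t = hit x' t.
Proof.
elim: t => [//|t IH] H /=.
rewrite IH; last by move=> i hi; apply: H; rewrite mulSn (leq_trans hi) // leq_addl.
congr (@Mn m _ _); apply: eq_from_tnth => i; rewrite !tnth_mktuple H //.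
by rewrite mulSn addnC ltn_add2r.
Qed.

Lemma hit_Om (Om : set 'rV[R]_d) x t :
  (forall (ys : m.-tuple Y) th, Om th -> Om (@Mn m ys th)) -> Om th0 -> Om (hit x t).
Proof. by move=> H H0; elim: t => //= t IH; exact: H. Qed.

Hypothesis HMn : measurable_fun [set: m.-tuple Y * d.-tuple R]
     (fun p => rv2t (@Mn m p.1 (t2rv p.2))).

Lemma hit_meas N t (y0 : Y) :
  measurable_fun setT (fun a : N.-tuple Y => rv2t (hit (fun i => nth y0 a i) t)).
Proof.
elim: t => [|t IH] /=; first exact: measurable_cst.
have -> : (fun a : N.-tuple Y => rv2t (@Mn m [tuple nth y0 a (t * m + i) | i < m] (hit (fun i => nth y0 a i) t)))
  = (fun p => rv2t (@Mn m p.1 (t2rv p.2))) \o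
    (fun a : N.-tuple Y => ([tuple nth y0 a (t * m + i) | i < m], rv2t (hit (fun i => nth y0 a i) t))).
  by apply/funext => a /=; rewrite rv2tK.
apply: measurableT_comp => //.
apply: measurable_fun_pair => //; exact: sub_meas.
Qed.
End Meas.


Lemma closure_le (R : realType) (e0 v : R) :
  (forall N, exists k, (N <= k)%N /\ v <= e0 + k.+1%:R^-1) -> v <= e0.
Proof.
move=> H; rewrite leNgt; apply/negP => /ltr_add_invr [N hN].
have [k [Nk hk]] := H N.
have hkN : k.+1%:R^-1 <= N.+1%:R^-1 :> R.
  by rewrite lef_pV2 ?posrE ?ltr0n // ler_nat ltnS.
have hN1 : e0 + k.+1%:R^-1 < v by apply: le_lt_trans hN; rewrite lerD2l.
have := le_lt_trans hk hN1; by rewrite ltxx.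
Qed.

Lemma inf_real (R : realType) (Q : R -> Prop) (c : R) :
  (forall e, Q e -> 0 <= e) ->
  (ereal_inf [set e%:E | e in Q] <= c%:E)%E ->
  exists es : R, ereal_inf [set e%:E | e in Q] = es%:E /\ 0 <= es /\ es <= c /\
    forall e, es < e -> exists e', Q e' /\ e' < e.
Proof.
move=> Q0 Hc.
have lb : (0%:E <= ereal_inf [set e%:E | e in Q])%E.
  by apply: le_ereal_inf_tmp => _ [e Qe <-]; rewrite lee_fin; exact: Q0.
have fin : ereal_inf [set e%:E | e in Q] \is a fin_num.
  by rewrite fin_numElt (lt_le_trans _ lb) ?ltNy0 // (le_lt_trans Hc) ?ltry.
exists (fine (ereal_inf [set e%:E | e in Q])); rewrite fineK //; split => //.
split; first by rewrite -lee_fin fineK.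
split; first by rewrite -lee_fin fineK.
move=> e he; have : (ereal_inf [set e%:E | e in Q] < e%:E)%E by rewrite -(fineK fin) lte_fin.
by move=> /ereal_inf_lt [_ [e' Qe' <-]]; rewrite lte_fin => h; exists e'.
Qed.

Lemma wp_nonempty (R : realType) dT (T : measurableType dT) (P : probability T R)
  (p : R) (E : T -> Prop) : 0 < p -> wp_atleast P p E -> exists w, E w.
Proof.
move=> p0 [A [mA [pA HA]]].
have : A != set0.
  apply/eqP => A0; move: pA; rewrite A0 measure0 lee_fin; lra.
by move=> /set0P [w Aw]; exists w; exact: HA.
Qed.

Lemma wp_mono (R : realType) dT (T : measurableType dT) (P : probability T R)
  (p : R) (E F : T -> Prop) : (forall w, E w -> F w) -> wp_atleast P p E -> wp_atleast P p F.
Proof. by move=> EF [A [mA [pA HA]]]; exists A; split => //; split => // w /HA /EF. Qed.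

Lemma final_bound (R : realType) (kappa es n0 x : R) (t : nat) :
  0 < kappa < 1 -> 0 <= es -> 0 <= n0 ->
  x <= kappa ^+ t * n0 + es * (1 - kappa ^+ t) / (1 - kappa) ->
  (x%:E <= (kappa ^+ t * n0)%:E + ((1 - kappa)^-1)%:E * es%:E)%E.
Proof.
move=> /andP[k0 k1] e0 n00 hx.
rewrite -EFinM -EFinD lee_fin (le_trans hx) // lerD2l.
have kt0 : 0 <= kappa ^+ t by rewrite exprn_ge0 // ltW.
have k1' : 0 < 1 - kappa by rewrite subr_gt0.
rewrite mulrC ler_pM2l ?invr_gt0 //; nra.
Qed.

Lemma part_a (R : realType) (d : nat) (dY dT : measure_display)
  (Y : measurableType dY) (T : measurableType dT)
  (Om : set 'rV[R]_d) (ts : 'rV[R]_d)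
  (P : probability T R) (X : nat -> T -> Y)
  (M : 'rV[R]_d -> 'rV[R]_d)
  (Mn : forall m, m.-tuple Y -> 'rV[R]_d -> 'rV[R]_d)
  (r kappa : R) (th0 : 'rV[R]_d) (delta : R) :
  (forall m (ys : m.-tuple Y) th, Om th -> Om (Mn m ys th)) ->
  0 < kappa < 1 ->
  (forall th, ball2 Om r ts th -> norm2 (M th - ts) <= kappa * norm2 (th - ts)) ->
  ball2 Om r ts th0 ->
  0 < delta < 1 ->
  (forall n : nat,
     (epsM_unif P X Om r ts M Mn n delta <= ((1 - kappa) * r)%:E)%E ->
     wp_atleast P (1 - delta) (fun w => forall t : nat,
       ((norm2 (em_iter X Mn n th0 t w - ts))%:E <=
        (kappa ^+ t * norm2 (th0 - ts))%:E
        + ((1 - kappa)^-1)%:E * epsM_unif P X Om r ts M Mn n delta)%E)).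
Proof.
move=> HOm hk Hc b0 /andP[d0 d1] n He.
pose E (e : R) (w : T) := forall th, ball2 Om r ts th ->
   norm2 (Mn n (block X 0 n w) th - M th) <= e.
have Q0 : forall e, wp_atleast P (1 - delta) (E e) -> 0 <= e.
  move=> e /wp_nonempty [|w Ew]; first by rewrite subr_gt0.
  exact: le_trans (norm2_ge0 _) (Ew _ b0).
have [es [esE [es0 [esc Hes]]]] := inf_real (Q := fun e => wp_atleast P (1 - delta) (E e)) Q0 He.
rewrite /epsM_unif esE.
have HE : wp_atleast P (1 - delta) (E es).
  apply: wp_inf.
    move=> e /Hes [e' [Qe' lt]]; apply: wp_mono Qe' => w Ew th bth.
    exact: le_trans (Ew th bth) (ltW lt).
  move=> w H th bth; apply: closure_le => N.
  have [k [Nk Hk]] := H N; exists k; split => //; exact: Hk.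
apply: wp_mono HE => w Ew t.
have n00 := norm2_ge0 (th0 - ts).
apply: final_bound => //.
have := iter_bound (x := fun t => em_iter X Mn n th0 t w) (Tb := t) hk es0 esc Hc erefl b0.
have Hs : forall t', (t' < t)%N -> ball2 Om r ts (em_iter X Mn n th0 t' w) ->
   Om (em_iter X Mn n th0 t'.+1 w) /\ norm2 (em_iter X Mn n th0 t'.+1 w - M (em_iter X Mn n th0 t' w)) <= es.
  move=> t' _ bt; split; first by apply: HOm; case: bt.
  exact: Ew.
by move=> /(_ Hs t (leqnn t)) [].
Qed.


Lemma sq_le (R : realType) (a b : R) : 0 <= a -> 0 <= b -> (a <= b) = (a ^+ 2 <= b ^+ 2).
Proof. by move=> a0 b0; rewrite ler_pXn2r ?nnegrE. Qed.

Lemma sq_lt (R : realType) (a b : R) : 0 <= a -> 0 <= b -> (a < b) = (a ^+ 2 < b ^+ 2).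
Proof. by move=> a0 b0; rewrite ltr_pXn2r ?nnegrE. Qed.

Lemma part_b (R : realType) (d : nat) (dY dT : measure_display)
  (Y : measurableType dY) (T : measurableType dT)
  (Om : set 'rV[R]_d) (ts : 'rV[R]_d)
  (P : probability T R) (X : nat -> T -> Y)
  (M : 'rV[R]_d -> 'rV[R]_d)
  (Mn : forall m, m.-tuple Y -> 'rV[R]_d -> 'rV[R]_d)
  (r kappa : R) (th0 : 'rV[R]_d) (delta : R) :
  (forall i, measurable_fun setT (X i)) ->
  (forall i A, measurable A -> P (X i @^-1` A) = P (X 0 @^-1` A)) ->
  (forall n (A : 'I_n -> set Y), (forall i, measurable (A i)) ->
     P (\bigcap_(i in [set: 'I_n]) (X i @^-1` A i)) =
     (\prod_(i < n) fine (P (X i @^-1` A i)))%:E) ->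
  (forall m (ys : m.-tuple Y) th, Om th -> Om (Mn m ys th)) ->
  measurable_fun [set: d.-tuple R] (fun t => rv2t (M (t2rv t))) ->
  (forall m, measurable_fun [set: m.-tuple Y * d.-tuple R]
     (fun p => rv2t (Mn m p.1 (t2rv p.2)))) ->
  0 < kappa < 1 ->
  (forall th, ball2 Om r ts th -> norm2 (M th - ts) <= kappa * norm2 (th - ts)) ->
  ball2 Om r ts th0 ->
  0 < delta < 1 ->
  (forall n T' : nat, (0 < T')%N -> (T' %| n)%N ->
     (epsM P X Om r ts M Mn (n %/ T') (delta / T'%:R) <= ((1 - kappa) * r)%:E)%E ->
     wp_atleast P (1 - delta) (fun w => forall t : nat, (t <= T')%N ->
       ((norm2 (em_split_iter X Mn (n %/ T') th0 t w - ts))%:E <=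
        (kappa ^+ t * norm2 (th0 - ts))%:E
        + ((1 - kappa)^-1)%:E * epsM P X Om r ts M Mn (n %/ T') (delta / T'%:R))%E)).
Proof.
move=> mX idX indX HOm HM HMn hk Hc b0 /andP[d0 d1] n T' T0 _ He.
set m := (n %/ T')%N. set dl := delta / T'%:R.
have T'0 : 0 < T'%:R :> R by rewrite ltr0n.
have dl0 : 0 < dl by rewrite divr_gt0.
have dld : dl <= delta.
  rewrite ler_pdivrMr //; have : (1 <= T'%:R :> R) by rewrite ler1n. nra.
have dl1 : dl < 1 by rewrite (le_lt_trans dld).
have hT : T'%:R * dl = delta by rewrite /dl mulrC -mulrA mulVf ?mulr1 // lt0r_neq0.
have r0 : 0 <= r by case: b0 => _ h; exact: le_trans (norm2_ge0 _) h.
pose E (e : R) (th : 'rV[R]_d) (w : T) := norm2 (Mn m (block X 0 m w) th - M th) <= e.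
have Q0 : forall e, (forall th, ball2 Om r ts th -> wp_atleast P (1 - dl) (E e th)) -> 0 <= e.
  move=> e /(_ th0 b0) /wp_nonempty [|w Ew]; first by rewrite subr_gt0.
  exact: le_trans (norm2_ge0 _) Ew.
have [es [esE [es0 [esc Hes]]]] := inf_real
  (Q := fun e => forall th, ball2 Om r ts th -> wp_atleast P (1 - dl) (E e th)) Q0 He.
have -> : epsM P X Om r ts M Mn m dl = es%:E by exact: esE.
have Hth : forall th, ball2 Om r ts th -> wp_atleast P (1 - dl) (E es th).
  move=> th bth; apply: (@wp_inf R dT T P (1 - dl) (fun e => E e th) es).
    move=> e /Hes [e' [Qe' lt]]; apply: wp_mono (Qe' th bth) => w Ew.
    exact: le_trans Ew (ltW lt).
  move=> w H; apply: closure_le => N.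
  have [k [Nk Hk]] := H N; exists k; split => //; exact: Hk.
pose Fm (p : m.-tuple Y * d.-tuple R) := \sum_(i < d)
   (tnth (rv2t (Mn m p.1 (t2rv p.2))) i - tnth (rv2t (M (t2rv p.2))) i) ^+ 2.
have mFm : measurable_fun setT Fm.
  apply: meas_sumsq; first exact: HMn.
  exact: (measurableT_comp HM measurable_snd).
have FmE b th : Fm (b, rv2t th) = norm2 (Mn m b th - M th) ^+ 2.
  rewrite norm2_sq /Fm /= rv2tK; apply: eq_bigr => i _.
  by rewrite !tnth_rv2t !mxE.
pose Gd (v : d.-tuple R) := \sum_(i < d) (tnth v i - tnth (rv2t ts) i) ^+ 2.
have mGd : measurable_fun setT Gd by apply: meas_sumsq => //; exact: measurable_cst.
have GdE th : Gd (rv2t th) = norm2 (th - ts) ^+ 2.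
  rewrite norm2_sq /Gd; apply: eq_bigr => i _.
  by rewrite !tnth_rv2t !mxE.
have Pbad : forall th, ball2 Om r ts th ->
    (P (block X 0 m @^-1` [set b | (es ^+ 2 < Fm (b, rv2t th))%R]) <= dl%:E)%E.
  move=> th bth; have [A [mA [pA HA]]] := Hth th bth.
  have mB : measurable [set b : m.-tuple Y | es ^+ 2 < Fm (b, rv2t th)].
    have mf : measurable_fun setT (fun b : m.-tuple Y => Fm (b, rv2t th)).
      apply: measurableT_comp mFm _.
      by apply: measurable_fun_pair => //; exact: measurable_cst.
    have := mf measurableT _ (measurable_itv `]es ^+ 2, +oo[).
    rewrite setTI; congr measurable; apply/seteqP; split => b /=;
      by rewrite in_itv /= andbT.
  have sub : block X 0 m @^-1` [set b | (es ^+ 2 < Fm (b, rv2t th))%R] `<=` ~` A.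
    move=> w /= hw Aw; have := HA w Aw; rewrite /E.
    rewrite (sq_le (norm2_ge0 _) es0) -FmE; lra.
  apply: (le_trans (le_measure _ _ _ sub)).
  - by rewrite inE; apply: block_pre_measurable.
  - by rewrite inE; apply: measurableC.
  have hC : P (~` A) = (1 - P A)%E := probability_setC P mA.
  change (P (~` A) <= dl%:E)%E; rewrite hC.
  have fA : P A = (fine (P A))%:E by rewrite fineK // fin_num_measure.
  rewrite fA; move: pA; rewrite fA lee_fin => pA.
  have -> : (1 - (fine (P A))%:E)%E = (1 - fine (P A))%:E by [].
  rewrite lee_fin; lra.
pose y0 : Y := point.
pose H (t : nat) (a : (t * m).-tuple Y) := rv2t (hit Mn m th0 (fun i => nth y0 a i) t).
have mH t : measurable_fun setT (H t) by exact: hit_meas.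
pose S t : set ((t * m).-tuple Y * m.-tuple Y) :=
  [set p | (Gd (H t p.1) <= r ^+ 2)%R /\ (es ^+ 2 < Fm (p.2, H t p.1))%R].
have mS t : measurable (S t).
  have mf1 : measurable_fun setT (fun p : (t * m).-tuple Y * m.-tuple Y => Gd (H t p.1)).
    exact: measurableT_comp mGd (measurableT_comp (mH t) measurable_fst).
  have mf2 : measurable_fun setT (fun p : (t * m).-tuple Y * m.-tuple Y => Fm (p.2, H t p.1)).
    apply: measurableT_comp mFm _.
    exact: measurable_fun_pair measurable_snd (measurableT_comp (mH t) measurable_fst).
  have := measurableI _ _ (mf1 measurableT _ (measurable_itv `]-oo, r ^+ 2]))
                          (mf2 measurableT _ (measurable_itv `]es ^+ 2, +oo[)).
  congr measurable; apply/seteqP; split => p /=; rewrite !in_itv /= ?andbT.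
    by move=> [[_ h1] [_ h2]].
  by move=> [h1 h2].
have Hx t (a : (t * m).-tuple Y) : (P (block X 0 m @^-1` xsection (S t) a) <= dl%:E)%E.
  have [hG|hG] := boolP (Gd (H t a) <= r ^+ 2).
    pose th := hit Mn m th0 (fun i => nth y0 a i) t.
    have bth : ball2 Om r ts th.
      split; first by apply: hit_Om; [exact: HOm | case: b0].
      by rewrite (sq_le (norm2_ge0 _) r0) -GdE.
    apply: le_trans (Pbad th bth).
    apply: le_measure.
    - rewrite inE; apply: (block_pre_measurable mX); exact: measurable_xsection (mS t).
    - rewrite inE; apply: (block_pre_measurable mX).
      have mf : measurable_fun setT (fun b : m.-tuple Y => Fm (b, rv2t th)).
        apply: measurableT_comp mFm _.
        by apply: measurable_fun_pair => //; exact: measurable_cst.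
      have := mf measurableT _ (measurable_itv `]es ^+ 2, +oo[).
      rewrite setTI; congr measurable; apply/seteqP; split => b /=;
        by rewrite in_itv /= andbT.
    move=> w /=; rewrite /xsection /= inE => -[_ h]; exact: h.
  have -> : xsection (S t) a = set0.
    apply/seteqP; split => // b; rewrite /xsection /= inE => -[h _].
    by move: hG; rewrite h.
  by rewrite preimage_set0 measure0 lee_fin ltW.
pose pr t (w : T) := (block X 0 (t * m) w, block X (t * m) m w).
have mpr t : measurable_fun setT (pr t).
  by apply: measurable_fun_pair; exact: block_measurable.
pose Ev t := pr t @^-1` S t.
have mEv t : measurable (Ev t).
  by have := mpr t measurableT _ (mS t); rewrite setTI.
have PE t : (P (Ev t) <= dl%:E)%E by exact: (prod_bound mX idX indX (mS t) (Hx t)).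
have itE t w : em_split_iter X Mn m th0 t w = hit Mn m th0 (fun i => X i w) t.
  by elim: t => //= t ->.
have HE t w : H t (block X 0 (t * m) w) = rv2t (em_split_iter X Mn m th0 t w).
  rewrite itE /H; congr rv2t; apply: hit_dep => i hi.
  have := nth_mktuple (fun j : 'I_(t * m) => X (0 + j)%N w) y0 (Ordinal hi).
  by rewrite /= add0n.
pose U k := \bigcup_(t in [set t | (t < k)%N]) Ev t.
have mU k : measurable (U k) by apply: bigcup_measurable => t _; exact: mEv.
have PU k : (P (U k) <= (k%:R * dl)%:E)%E.
  elim: k => [|k IH].
    have -> : U 0%N = set0 by apply/seteqP; split => // w [].
    by rewrite measure0 mul0r.
  have -> : U k.+1 = U k `|` Ev k.
    apply/seteqP; split => w.
      move=> [t /= tk Et]; move: tk; rewrite ltnS leq_eqVlt => /orP [/eqP tk|tk].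
        by right; rewrite -tk.
      by left; exists t.
    move=> [[t /= tk Et]|Ek].
      by exists t => //; rewrite /= ltnS ltnW.
    by exists k => //=.
  apply: le_trans (measureU2 _ (mU k) (mEv k)) _.
  rewrite -nat1r mulrDl mul1r EFinD [X in (_ <= X)%E]addeC; exact: leeD IH (PE k).
exists (~` U T'); split; first exact: measurableC.
split.
  have hC : P (~` U T') = (1 - P (U T'))%E := probability_setC P (mU T').
  rewrite hC.
  have fU : P (U T') = (fine (P (U T')))%:E by rewrite fineK // fin_num_measure.
  move: (PU T'); rewrite fU lee_fin hT => hU.
  have -> : (1 - (fine (P (U T')))%:E)%E = (1 - fine (P (U T')))%:E by [].
  rewrite lee_fin; lra.
move=> w nU t tT.
have n00 := norm2_ge0 (th0 - ts).
apply: final_bound => //.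
have Hs : forall t', (t' < T')%N -> ball2 Om r ts (em_split_iter X Mn m th0 t' w) ->
   Om (em_split_iter X Mn m th0 t'.+1 w) /\
   norm2 (em_split_iter X Mn m th0 t'.+1 w - M (em_split_iter X Mn m th0 t' w)) <= es.
  move=> t' t'T bt; split; first by apply: HOm; case: bt.
  rewrite leNgt; apply/negP => hlt; apply: nU; exists t' => //.
  rewrite /Ev /pr /S /=; rewrite HE; split.
    by rewrite GdE -sq_le ?norm2_ge0 //; case: bt.
  by rewrite FmE -sq_lt ?norm2_ge0.
have := iter_bound (x := fun t => em_split_iter X Mn m th0 t w) (Tb := T') hk es0 esc Hc erefl b0.
by move=> /(_ Hs t tT) [].
Qed.

Theorem theorem2 (R : realType) (d : nat)
  (dY dZ dT : measure_display)
  (Y : measurableType dY) (Z : measurableType dZ) (T : measurableType dT)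
  (muY : {measure set Y -> \bar R}) (muZ : {measure set Z -> \bar R})
  (f : 'rV[R]_d -> Y -> Z -> R)
  (Om : set 'rV[R]_d) (ts : 'rV[R]_d)
  (P : probability T R) (X : nat -> T -> Y)
  (M : 'rV[R]_d -> 'rV[R]_d)
  (Mn : forall m, m.-tuple Y -> 'rV[R]_d -> 'rV[R]_d)
  (r kappa : R) (th0 : 'rV[R]_d) (delta : R) :
  (* standing assumptions *)
  Om !=set0 -> compact Om -> convex_set Om -> Om ts ->
  is_density_family muY muZ f ->
  iid_with_density P muY (gdens muZ f ts) X ->
  (* M is the population EM operator, M_n the sample EM operator *)
  (forall th, Om th -> is_argmax Om (fun th' => Qfun muY muZ f ts th' th) (M th)) ->
  (forall m (ys : m.-tuple Y) th, Om th ->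
     is_argmax Om (fun th' => Qhat muZ f ys th' th) (Mn m ys th)) ->
  (* regularity (measurability) of the EM operators in (samples, theta) *)
  measurable_fun [set: d.-tuple R] (fun t => rv2t (M (t2rv t))) ->
  (forall m, measurable_fun [set: m.-tuple Y * d.-tuple R]
     (fun p => rv2t (Mn m p.1 (t2rv p.2)))) ->
  (* contractivity and initialization *)
  0 < kappa < 1 ->
  (forall th, ball2 Om r ts th -> norm2 (M th - ts) <= kappa * norm2 (th - ts)) ->
  ball2 Om r ts th0 ->
  0 < delta < 1 ->
  (* (a) *)
  (forall n : nat,
     (epsM_unif P X Om r ts M Mn n delta <= ((1 - kappa) * r)%:E)%E ->
     wp_atleast P (1 - delta) (fun w => forall t : nat,
       ((norm2 (em_iter X Mn n th0 t w - ts))%:E <=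
        (kappa ^+ t * norm2 (th0 - ts))%:E
        + ((1 - kappa)^-1)%:E * epsM_unif P X Om r ts M Mn n delta)%E))
  /\
  (* (b) *)
  (forall n T' : nat, (0 < T')%N -> (T' %| n)%N ->
     (epsM P X Om r ts M Mn (n %/ T') (delta / T'%:R) <= ((1 - kappa) * r)%:E)%E ->
     wp_atleast P (1 - delta) (fun w => forall t : nat, (t <= T')%N ->
       ((norm2 (em_split_iter X Mn (n %/ T') th0 t w - ts))%:E <=
        (kappa ^+ t * norm2 (th0 - ts))%:E
        + ((1 - kappa)^-1)%:E * epsM P X Om r ts M Mn (n %/ T') (delta / T'%:R))%E)).

Proof.
move=> _ _ _ _ _ [mX [dX indX]] _ HMn' HM HMnm hk Hc b0 hd.
have HOm : forall m (ys : m.-tuple Y) th, Om th -> Om (Mn m ys th).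
  by move=> m ys th h; case: (HMn' m ys th h).
have idX : forall i A, measurable A -> P (X i @^-1` A) = P (X 0 @^-1` A).
  by move=> i A mA; rewrite !dX.
split.
  exact: part_a.
exact: part_b.
Qed.
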